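(* Let $S$ be a strongly $E^*$-unitary inverse semigroup with pure grading $\varphi:S^\times\to G$ and idempotent semilattice $E$. Then $(\{\mathcal T_c(E_g)\}_{g\in G},\{\hat\phi_g\}_{g\in G})$ is a partial action of $G$ on the generalized Boolean algebra $\mathcal T_c(E)$.
   Context: A generalized Boolean algebra is a distributive, relatively complemented lattice with least element $0$; an ideal is a subset closed under joins and under meets with arbitrary elements. A partial action of a group $G$ (identity $e$) on $\mathcal B$ is a family of ideals $\mathcal I_t$ and generalized Boolean algebra isomorphisms $\phi_t:\mathcal I_{t^{-1}}\to\mathcal I_t$ with (i) $\mathcal I_e=\mathcal B$, $\phi_e=\mathrm{id}$; (ii) $\phi_s(\mathcal I_{s^{-1}}\cap\mathcal I_t)=\mathcal I_s\cap\mathcal I_{st}$; (iii) $\phi_s\phi_t(x)=\phi_{st}(x)$ for $x\in\mathcal I_{t^{-1}}\cap\mathcal I_{(st)^{-1}}$. Tight filters: for a meet semilattice $P$ with $0$, a filter is a subset $F$, $\emptyset\ne F\ne P$, closed upwards and under meets; $F(P)$ has the topology generated by $\{F:x\in F\}$; the tight filters $T(P)$ are the closure of the ultrafilters (maximal filters); $V^P_{(x:x_1,\dots,x_n)}=\{\xi\in T(P):x\in\xi,\ x_1,\dots,x_n\notin\xi\}$, $V^P_x=V^P_{(x:)}$; these form a basis of compact open sets, and $\mathcal T_c(P)$ is the generalized Boolean algebra of compact open subsets of $T(P)$. Inverse semigroups: $S$ is an inverse semigroup with zero, $s^*$ the unique inverse of $s$, $E$ its idempotents, a meet semilattice with $x\wedge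 y=xy$ and least element $0$ ($x\le y$ iff $x=xy$); $S^\times=S\setminus\{0\}$, $E^\times=E\setminus\{0\}$. A pure grading is a map $\varphi:S^\times\to G$ to a group with $\varphi(ab)=\varphi(a)\varphi(b)$ whenever $ab\ne0$ and $\varphi^{-1}(1_G)=E^\times$; $S$ is strongly $E^*$-unitary if it has one. For $g\in G$, $E_g=\{x\in E: x\le ss^*$ for some $s$ with $\varphi(s)=g\}$ if $\varphi^{-1}(g)\ne\emptyset$, and $E_g=\{0\}$ otherwise; $E_g$ is downward closed and $E_e=E$. The map $\phi_g:E_{g^{-1}}\to E_g$, $x\mapsto sxs^*$ for any $s$ with $\varphi(s)=g$ and $x\le s^*s$, is a well-defined meet-semilattice isomorphism. Since $E_g$ is downward closed, $\mathcal T_c(E_g)$ is identified with the set of compact open subsets of $T(E)$ contained in $\bigcup_{x\in E_g}V^E_x$ (an ideal of $\mathcal T_c(E)$), via $U\mapsto\{\xi\in T(E):\xi\cap E_g\ne\emptyset,\ \xi\cap E_g\in U\}$, sending $V^{E_g}_{(x:x_1,\dots,x_n)}\mapsto V^E_{(x:x_1,\dots,x_n)}$. The isomorphism $\phi_g$ induces a homeomorphism $T(E_{g^{-1}})\to T(E_g)$, $\xi\mapsto\phi_g(\xi)$, hence a generalized Boolean algebra isomorphism $\hat\phi_g:\mathcal T_c(E_{g^{-1}})\to\mathcal T_c(E_g)$ with $\hat\phi_g(V_{(x:x_1,\dots,x_n)})=V_{(\phi_g(x):\phi_g(x_1),\dots,\phi_g(x_n))}$. *)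

(* Defs.v *)
From Stdlib Require Import List.
Import ListNotations.
Set Implicit Arguments.

Record InvSemigroup := {
  car :> Type;
  smul : car -> car -> car;
  szero : car;
  sstar : car -> car;
  smul_assoc : forall a b c, smul a (smul b c) = smul (smul a b) c;
  szero_l : forall a, smul szero a = szero;
  szero_r : forall a, smul a szero = szero;
  sstar_inv1 : forall s, smul (smul s (sstar s)) s = s;
  sstar_inv2 : forall s, smul (smul (sstar s) s) (sstar s) = sstar s;
  sstar_unique : forall s t, smul (smul s t) s = s ->
                   smul (smul t s) t = t -> t = sstar s
}.

Record Grp := {
  gcar :> Type;
  gmul : gcar -> gcar -> gcar;
  gone : gcar;
  ginv : gcar -> gcar;
  gmul_assoc : forall a b c, gmul a (gmul b c) = gmul (gmul a b) c;
  gone_l : forall a, gmul gone a = a;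
  gone_r : forall a, gmul a gone = a;
  ginv_l : forall a, gmul (ginv a) a = gone;
  ginv_r : forall a, gmul a (ginv a) = gone
}.

Section Defs.
Variable S : InvSemigroup.
Variable G : Grp.

Definition is_idem (x : S) : Prop := smul S x x = x.

Definition sleq (x y : S) : Prop := x = smul S x y.

(* pure grading  phi : S^x -> G  (given as a total map; its value at 0 is irrelevant) *)
Definition pure_grading (phi : S -> G) : Prop :=
  (forall a b, smul S a b <> szero S ->
     phi (smul S a b) = gmul G (phi a) (phi b)) /\
  (forall a, a <> szero S -> (phi a = gone G <-> is_idem a)).

Definition Eg (phi : S -> G) (g : G) (x : S) : Prop :=
  ((exists s, s <> szero S /\ phi s = g) /\
     (is_idem x /\ exists s, s <> szero S /\ phi s = g /\
                     sleq x (smul S s (sstar S s))))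
  \/ (~ (exists s, s <> szero S /\ phi s = g) /\ x = szero S).

Definition phig_rel (phi : S -> G) (g : G) (x y : S) : Prop :=
  exists s, s <> szero S /\ phi s = g /\ sleq x (smul S (sstar S s) s) /\
            y = smul S (smul S s x) (sstar S s).
End Defs.

Section Tight.
Variable A : Type.
Variable m : A -> A -> A.
Variable P : A -> Prop.     (* the meet semilattice (a subset of A closed under m) *)

Definition mleq (x y : A) : Prop := x = m x y.

Definition is_filter (F : A -> Prop) : Prop :=
  (forall x, F x -> P x) /\
  (exists x, F x) /\
  (exists x, P x /\ ~ F x) /\
  (forall x y, F x -> P y -> mleq x y -> F y) /\
  (forall x y, F x -> F y -> F (m x y)).

Definition is_ultrafilter (F : A -> Prop) : Prop :=
  is_filter F /\ forall F', is_filter F' -> (forall x, F x -> F' x) ->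
                            (forall x, F' x -> F x).

(* basic open sets of the product topology of {0,1}^P restricted to filters *)
Definition basic (xs ys : list A) (F : A -> Prop) : Prop :=
  (forall x, In x xs -> F x) /\ (forall y, In y ys -> ~ F y).

(* tight filters: closure of the ultrafilters in F(P) *)
Definition is_tight (F : A -> Prop) : Prop :=
  is_filter F /\
  forall xs ys, basic xs ys F -> exists U, is_ultrafilter U /\ basic xs ys U.

Definition open_in (X U : (A -> Prop) -> Prop) : Prop :=
  (forall xi, U xi -> X xi) /\
  forall xi, U xi -> exists xs ys, basic xs ys xi /\
     forall eta, X eta -> basic xs ys eta -> U eta.

Definition compact_in (X K : (A -> Prop) -> Prop) : Prop :=
  (forall xi, K xi -> X xi) /\
  forall (I : Type) (C : I -> (A -> Prop) -> Prop),
    (forall i, open_in X (C i)) ->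
    (forall xi, K xi -> exists i, C i xi) ->
    exists l : list I, forall xi, K xi -> exists i, In i l /\ C i xi.

Definition Tc (U : (A -> Prop) -> Prop) : Prop :=
  open_in is_tight U /\ compact_in is_tight U.
End Tight.

Section PA.
Variable Pt : Type.
Definition sunion (V W : Pt -> Prop) : Pt -> Prop := fun p => V p \/ W p.
Definition sinter (V W : Pt -> Prop) : Pt -> Prop := fun p => V p /\ W p.
Definition sdiff (V W : Pt -> Prop) : Pt -> Prop := fun p => V p /\ ~ W p.
Definition sempty : Pt -> Prop := fun _ => False.

Definition is_ideal (B I : (Pt -> Prop) -> Prop) : Prop :=
  (forall V, I V -> B V) /\ I sempty /\
  (forall V W, I V -> I W -> I (sunion V W)) /\
  (forall V W, I V -> B W -> I (sinter V W)).

Definition is_gba_iso (I J : (Pt -> Prop) -> Prop) (f : (Pt -> Prop) -> (Pt -> Prop)) : Prop :=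
  (forall V, I V -> J (f V)) /\
  (forall W, J W -> exists V, I V /\ f V = W) /\
  (forall V V', I V -> I V' -> f V = f V' -> V = V') /\
  f sempty = sempty /\
  (forall V W, I V -> I W -> f (sunion V W) = sunion (f V) (f W)) /\
  (forall V W, I V -> I W -> f (sinter V W) = sinter (f V) (f W)) /\
  (forall V W, I V -> I W -> f (sdiff V W) = sdiff (f V) (f W)).

Definition is_partial_action (G : Grp) (B : (Pt -> Prop) -> Prop)
  (I : G -> (Pt -> Prop) -> Prop) (f : G -> (Pt -> Prop) -> (Pt -> Prop)) : Prop :=
  (forall g, is_ideal B (I g)) /\
  (forall g, is_gba_iso (I (ginv G g)) (I g) (f g)) /\
  (forall V, I (gone G) V <-> B V) /\
  (forall V, B V -> f (gone G) V = V) /\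
  (forall s t W, (exists V, I (ginv G s) V /\ I t V /\ f s V = W) <->
                 (I s W /\ I (gmul G s t) W)) /\
  (forall s t V, I (ginv G t) V -> I (ginv G (gmul G s t)) V ->
                 f s (f t V) = f (gmul G s t) V).
End PA.

Section Data.
Variable S : InvSemigroup.
Variable G : Grp.
Variable phi : S -> G.

Definition TcE : ((S -> Prop) -> Prop) -> Prop := Tc (smul S) (@is_idem S).
Definition TcEg (g : G) : ((S -> Prop) -> Prop) -> Prop := Tc (smul S) (@Eg S G phi g).

(* identification iota_g : T_c(E_g) -> T_c(E),
   U |-> {xi in T(E) : xi /\ E_g <> empty, xi /\ E_g in U} *)
Definition iota (g : G) (U : (S -> Prop) -> Prop) : (S -> Prop) -> Prop :=
  fun xi => is_tight (smul S) (@is_idem S) xi /\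
            (exists x, xi x /\ @Eg S G phi g x) /\
            U (fun x => xi x /\ @Eg S G phi g x).

Definition rho (g : G) (V : (S -> Prop) -> Prop) : (S -> Prop) -> Prop :=
  fun zeta => exists xi, V xi /\ (exists x, xi x /\ @Eg S G phi g x) /\
                         forall x, zeta x <-> (xi x /\ @Eg S G phi g x).

Definition hatphi (g : G) (U : (S -> Prop) -> Prop) : (S -> Prop) -> Prop :=
  fun zeta => exists xi, U xi /\
                forall y, zeta y <-> exists x, xi x /\ @phig_rel S G phi g x y.

Definition Ig (g : G) (V : (S -> Prop) -> Prop) : Prop :=
  exists U, TcEg g U /\ V = iota g U.

(* hat phi_g transported to the ideals of T_c(E) *)
Definition psi (g : G) (V : (S -> Prop) -> Prop) : (S -> Prop) -> Prop :=
  iota g (hatphi g (rho (ginv G g) V)).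
End Data.

(* Submission.v *)
Require Import Defs.
From Stdlib Require Import List Classical ClassicalEpsilon FunctionalExtensionality PropExtensionality.
Import ListNotations.

Module Alg.

Section Grp.
Variable G : Grp.
Local Notation "a ** b" := (gmul G a b) (at level 40, left associativity).
Lemma g_cancel_l (a b c : G) : a ** b = a ** c -> b = c.
Proof. intro H. rewrite <- (gone_l G b), <- (gone_l G c), <- (ginv_l G a), <- !gmul_assoc, H. reflexivity. Qed.
Lemma g_cancel_r (a b c : G) : b ** a = c ** a -> b = c.
Proof. intro H. rewrite <- (gone_r G b), <- (gone_r G c), <- (ginv_r G a), !gmul_assoc, H. reflexivity. Qed.
Lemma ginv_ginv (a : G) : ginv G (ginv G a) = a.
Proof. apply (g_cancel_l (ginv G a)). rewrite ginv_r, ginv_l. reflexivity. Qed.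
Lemma ginv_mul (a b : G) : ginv G (a ** b) = ginv G b ** ginv G a.
Proof. apply (g_cancel_l (a ** b)). rewrite ginv_r. rewrite <- gmul_assoc, (gmul_assoc G b), ginv_r, gone_l, ginv_r. reflexivity. Qed.
Lemma ginv_one : ginv G (gone G) = gone G.
Proof. rewrite <- (gone_l G (ginv G (gone G))). apply ginv_r. Qed.
Lemma g_idem_one (a b : G) : a ** b = a -> b = gone G.
Proof. intro H. apply (g_cancel_l a). rewrite gone_r. exact H. Qed.
End Grp.

Section Alg.
Variable S : InvSemigroup.
Local Notation "x * y" := (smul S x y).
Local Notation "0" := (szero S).
Local Notation "x ^*" := (sstar S x) (at level 2).
Local Notation idem := (@is_idem S).
Local Notation le := (sleq S).

Lemma sa (a b c : S) : a * (b * c) = (a * b) * c.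
Proof. apply smul_assoc. Qed.

Ltac nrm := repeat rewrite sa.

Lemma idem_r (a f : S) : idem f -> (a * f) * f = a * f.
Proof. intro H. rewrite <- sa. unfold is_idem in H. rewrite H. reflexivity. Qed.

Ltac cl H := unfold is_idem in H; repeat rewrite (idem_r _ _ H); repeat rewrite H.

Lemma zero_idem : idem 0.
Proof. unfold is_idem. apply szero_l. Qed.

Lemma idem_star (e : S) : idem e -> e^* = e.
Proof. intro H. unfold is_idem in H. symmetry. apply sstar_unique; rewrite !H; reflexivity. Qed.

Lemma star_star (s : S) : (s^*)^* = s.
Proof. symmetry. apply sstar_unique. apply sstar_inv2. apply sstar_inv1. Qed.

Lemma ss_idem (s : S) : idem (s * s^*).
Proof. unfold is_idem. rewrite sa, sstar_inv1. reflexivity. Qed.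
Lemma ss_idem' (s : S) : idem (s^* * s).
Proof. unfold is_idem. rewrite sa, sstar_inv2. reflexivity. Qed.

Lemma idem_mul (e f : S) : idem e -> idem f -> idem (e * f).
Proof.
  intros He Hf.
  set (x := (e * f)^*).
  assert (H1 : (e * f) * x * (e * f) = e * f) by apply sstar_inv1.
  assert (H2 : x * (e * f) * x = x) by apply sstar_inv2.
  assert (Hx : f * x * e = x).
  { unfold x at 2. apply sstar_unique.
    - transitivity (e*f*x*(e*f)); [ | exact H1]. nrm. cl Hf. cl He. reflexivity.
    - replace (f * x * e * (e * f) * (f * x * e)) with (f * (x * (e*f) * x) * e)
        by (nrm; cl Hf; cl He; reflexivity). rewrite H2. reflexivity. }
  assert (Hxi : idem x).
  { unfold is_idem. transitivity ((f*x*e)*(f*x*e)); [rewrite Hx; reflexivity|].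
    replace (f * x * e * (f * x * e)) with (f * (x * (e*f) * x) * e) by (nrm; reflexivity).
    rewrite H2. exact Hx. }
  assert (Hef : e * f = x).
  { rewrite <- (idem_star x Hxi). apply sstar_unique.
    - exact H2.
    - exact H1. }
  rewrite Hef. exact Hxi.
Qed.

Lemma idem_comm (e f : S) : idem e -> idem f -> e * f = f * e.
Proof.
  intros He Hf.
  assert (Hefi := idem_mul e f He Hf). assert (Hfe := idem_mul f e Hf He).
  rewrite <- (idem_star (e*f) Hefi). symmetry. apply sstar_unique.
  - replace (e * f * (f * e) * (e * f)) with ((e * f) * (e * f)) by (nrm; cl Hf; cl He; reflexivity).
    exact Hefi.
  - replace (f * e * (e * f) * (f * e)) with ((f * e) * (f * e)) by (nrm; cl Hf; cl He; reflexivity).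
    exact Hfe.
Qed.

Lemma comm_r (a e f : S) : idem e -> idem f -> a * e * f = a * f * e.
Proof. intros He Hf. rewrite <- !sa, (idem_comm e f He Hf). reflexivity. Qed.

Lemma inv1_r (a s : S) : a * s * s^* * s = a * s.
Proof. rewrite <- !sa, (sa s), sstar_inv1. reflexivity. Qed.
Lemma inv2_r (a s : S) : a * s^* * s * s^* = a * s^*.
Proof. rewrite <- !sa, (sa (s^*)), sstar_inv2. reflexivity. Qed.

Lemma star_mul (s t : S) : (s * t)^* = t^* * s^*.
Proof.
  symmetry. apply sstar_unique.
  - replace (s * t * (t^* * s^*) * (s * t)) with (s * ((t * t^*) * (s^* * s)) * t) by (nrm; reflexivity).
    rewrite (idem_comm _ _ (ss_idem t) (ss_idem' s)). nrm. rewrite inv1_r. rewrite sstar_inv1. reflexivity.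
  - replace (t^* * s^* * (s * t) * (t^* * s^*)) with (t^* * ((s^* * s) * (t * t^*)) * s^*) by (nrm; reflexivity).
    rewrite <- (idem_comm _ _ (ss_idem t) (ss_idem' s)). nrm. rewrite inv2_r. rewrite sstar_inv2. reflexivity.
Qed.

Lemma le_trans' (x y z : S) : le x y -> le y z -> le x z.
Proof. unfold sleq. intros H1 H2. rewrite H1 at 1. rewrite H2 at 1. rewrite sa, <- H1. reflexivity. Qed.
Lemma le_mul_l (x y : S) : idem x -> idem y -> le (x * y) x.
Proof. intros Hx Hy. unfold sleq. rewrite comm_r by assumption. cl Hx. reflexivity. Qed.
Lemma le_mul_r (x y : S) : idem y -> le (x * y) y.
Proof. intros Hy. unfold sleq. cl Hy. reflexivity. Qed.
Lemma le_zero (y : S) : le 0 y.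
Proof. unfold sleq. rewrite szero_l. reflexivity. Qed.
Lemma le_meet (z x y : S) : le z x -> le z y -> le z (x * y).
Proof. unfold sleq. intros H1 H2. rewrite sa, <- H1. exact H2. Qed.
Lemma le_refl (x : S) : idem x -> le x x.
Proof. unfold sleq, is_idem. intro H. rewrite H. reflexivity. Qed.
Lemma idem_le (x y : S) : idem y -> le x y -> idem x -> True.
Proof. auto. Qed.
Lemma le_zero_eq (x : S) : le x 0 -> x = 0.
Proof. unfold sleq. intro H. rewrite szero_r in H. exact H. Qed.
Lemma le_comm (x y : S) : idem x -> idem y -> le x y -> x = y * x.
Proof. intros Hx Hy H. rewrite <- idem_comm by assumption. exact H. Qed.

Lemma nz_star (s : S) : s <> 0 -> s^* <> 0.
Proof. intros H H0. apply H. rewrite <- (sstar_inv1 S s), H0, szero_r, szero_l. reflexivity. Qed.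
Lemma nz_ss (s : S) : s <> 0 -> s * s^* <> 0.
Proof. intros H H0. apply H. rewrite <- (sstar_inv1 S s), H0, szero_l. reflexivity. Qed.
Lemma nz_ss' (s : S) : s <> 0 -> s^* * s <> 0.
Proof. intros H H0. apply H. rewrite <- (sstar_inv1 S s), <- sa, H0, szero_r. reflexivity. Qed.
Lemma nz_mul_l (a b : S) : a * b <> 0 -> a <> 0.
Proof. intros H H0. apply H. rewrite H0. apply szero_l. Qed.
Lemma nz_mul_r (a b : S) : a * b <> 0 -> b <> 0.
Proof. intros H H0. apply H. rewrite H0. apply szero_r. Qed.

End Alg.

End Alg.
Import Alg.

Module Rel.

Ltac nrm := repeat rewrite smul_assoc.
Ltac cl H := unfold is_idem in H; repeat rewrite (idem_r _ _ _ H); repeat rewrite H.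

Section Rel.
Variable S : InvSemigroup.
Variable G : Grp.
Variable phi : S -> G.
Hypothesis Hphi : pure_grading S G phi.
Local Notation "x * y" := (smul S x y).
Local Notation "0" := (szero S).
Local Notation "x ^*" := (sstar S x) (at level 2).
Local Notation idem := (@is_idem S).
Local Notation le := (sleq S).
Local Notation "a ** b" := (gmul G a b) (at level 40, left associativity).
Local Notation E := (Eg S G phi).
Local Notation rel := (phig_rel S G phi).

Lemma phi_mul (a b : S) : a * b <> 0 -> phi (a * b) = phi a ** phi b.
Proof. apply (proj1 Hphi). Qed.
Lemma phi_idem (x : S) : x <> 0 -> idem x -> phi x = gone G.
Proof. intros H1 H2. apply (proj2 Hphi x H1). exact H2. Qed.
Lemma idem_phi (x : S) : x <> 0 -> phi x = gone G -> idem x.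
Proof. intros H1 H2. apply (proj2 Hphi x H1). exact H2. Qed.
Lemma phi_star (s : S) : s <> 0 -> phi (s^*) = ginv G (phi s).
Proof.
  intro H. assert (H1 : s * s^* <> 0) by (apply nz_ss; exact H).
  assert (H2 : s * s^* * s <> 0) by (rewrite sstar_inv1; exact H).
  assert (E1 := phi_mul _ _ H2). rewrite (phi_mul s (s^*) H1) in E1. rewrite sstar_inv1 in E1.
  apply (g_cancel_l G (phi s)). rewrite ginv_r.
  apply (g_cancel_r G (phi s)). rewrite gone_l. symmetry. exact E1.
Qed.

Lemma Eg_idem g x : E g x -> idem x.
Proof. intros [[_ [H _]] | [_ H]]. exact H. subst. apply zero_idem. Qed.
Lemma Eg_zero g : E g 0.
Proof.
  destruct (classic (exists s, s <> 0 /\ phi s = g)) as [H|H].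
  - left. split; [exact H|]. split; [apply zero_idem|]. destruct H as [s [H1 H2]].
    exists s. split; [exact H1|]. split; [exact H2|]. apply le_zero.
  - right. split; [exact H | reflexivity].
Qed.
Lemma Eg_intro g s x : s <> 0 -> phi s = g -> idem x -> le x (s * s^*) -> E g x.
Proof. intros. left. split. exists s; split; assumption. split. assumption. exists s. auto. Qed.
Lemma Eg_elim g x : E g x -> x <> 0 -> exists s, s <> 0 /\ phi s = g /\ le x (s * s^*).
Proof. intros [[_ [_ H]] | [_ H]] Hx. exact H. contradiction. Qed.
Lemma Eg_down g x y : E g x -> idem y -> le y x -> E g y.
Proof.
  intros H Hy Hle. destruct (classic (y = 0)) as [Hy0|Hy0]. subst; apply Eg_zero.
  assert (Hx0 : x <> 0). { intro Hx0. subst. apply Hy0. apply le_zero_eq. exact Hle. }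
  destruct (Eg_elim _ _ H Hx0) as [s [Hs1 [Hs2 Hs3]]].
  apply (Eg_intro g s); auto. eapply le_trans'; eassumption.
Qed.
Lemma Eg_one : E (gone G) = idem.
Proof.
  apply functional_extensionality. intro x. apply propositional_extensionality. split.
  apply Eg_idem. intro H. destruct (classic (x = 0)) as [H0|H0]. subst; apply Eg_zero.
  apply (Eg_intro _ x); auto. apply phi_idem; auto. rewrite (idem_star _ x H).
  unfold sleq. unfold is_idem in H. rewrite !H. reflexivity.
Qed.

Lemma back (s x : S) : idem x -> le x (s^* * s) -> s^* * s * x = x.
Proof. intros Hx H. unfold sleq in H. rewrite <- idem_comm; auto. apply ss_idem'. Qed.

Lemma rel_back g x y : idem x -> rel g x y ->
  exists s, s <> 0 /\ phi s = g /\ le x (s^* * s) /\ y = s * x * s^* /\ s^* * y * s = x /\ y = y * (s * s^*).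
Proof.
  intros Hx [s [H1 [H2 [H3 H4]]]]. exists s. repeat split; auto.
  - subst y. replace (s^* * (s * x * s^*) * s) with ((s^* * s) * x * (s^* * s)) by (nrm; reflexivity).
    rewrite back by auto. symmetry. exact H3.
  - subst y. nrm. rewrite inv2_r. reflexivity.
Qed.

Lemma rel_zero g x y : idem x -> x <> 0 -> rel g x y -> y <> 0.
Proof.
  intros Hx Hx0 H. destruct (rel_back _ _ _ Hx H) as [s [_ [_ [_ [_ [H5 _]]]]]].
  intro Hy. apply Hx0. rewrite <- H5, Hy, szero_r, szero_l. reflexivity.
Qed.

Lemma rel_exists g x : idem x -> x <> 0 -> E (ginv G g) x -> exists y, rel g x y.
Proof.
  intros Hx Hx0 HE. destruct (Eg_elim _ _ HE Hx0) as [t [Ht1 [Ht2 Ht3]]].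
  exists (t^* * x * t^*^*). exists (t^*). repeat split.
  - apply nz_star; auto.
  - rewrite phi_star, Ht2 by auto. apply ginv_ginv.
  - rewrite star_star. exact Ht3.
Qed.

Lemma rel_img g x y : idem x -> rel g x y -> idem y /\ E g y.
Proof.
  intros Hx H. destruct (rel_back _ _ _ Hx H) as [s [H1 [H2 [H3 [H4 [H5 H6]]]]]].
  assert (Hy : idem y).
  { unfold is_idem. subst y.
    replace (s * x * s^* * (s * x * s^*)) with (s * (x * (s^* * s)) * x * s^*) by (nrm; reflexivity).
    rewrite <- H3. nrm. cl Hx. reflexivity. }
  split; auto. apply (Eg_intro g s); auto.
Qed.

Lemma rel_inv g x y : idem x -> rel g x y -> rel (ginv G g) y x.
Proof.
  intros Hx H. destruct (rel_back _ _ _ Hx H) as [s [H1 [H2 [H3 [H4 [H5 H6]]]]]].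
  exists (s^*). repeat split.
  - apply nz_star; auto.
  - rewrite phi_star, H2 by auto. reflexivity.
  - rewrite star_star. exact H6.
  - rewrite star_star. symmetry. exact H5.
Qed.

Lemma rel_fun g x y y' : idem x -> x <> 0 -> rel g x y -> rel g x y' -> y = y'.
Proof.
  intros Hx Hx0 H H'.
  assert (Hy0 := rel_zero _ _ _ Hx Hx0 H).
  destruct H as [s [H1 [H2 [H3 H4]]]]. destruct H' as [r [R1 [R2 [R3 R4]]]].
  set (e := s * x * r^*).
  assert (Hes : e^* = r * x * s^*).
  { unfold e. rewrite !star_mul, star_star, (idem_star _ x Hx). nrm. reflexivity. }
  assert (Hee : e * e^* = y).
  { rewrite Hes. unfold e. subst y.
    replace (s * x * r^* * (r * x * s^*)) with (s * (x * (r^* * r)) * x * s^*) by (nrm; reflexivity).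
    rewrite <- R3. nrm. cl Hx. reflexivity. }
  assert (Hee' : e^* * e = y').
  { rewrite Hes. unfold e. subst y'.
    replace (r * x * s^* * (s * x * r^*)) with (r * (x * (s^* * s)) * x * r^*) by (nrm; reflexivity).
    rewrite <- H3. nrm. cl Hx. reflexivity. }
  assert (He0 : e <> 0). { intro He. apply Hy0. rewrite <- Hee, He. apply szero_l. }
  assert (Hsx : s * x <> 0) by (apply (nz_mul_l _ _ (r^*)); exact He0).
  assert (Hphie : phi e = gone G).
  { unfold e. rewrite phi_mul by exact He0. rewrite phi_mul by exact Hsx.
    rewrite (phi_idem x Hx0 Hx), (phi_star r R1). rewrite H2, R2, gone_r, ginv_r. reflexivity. }
  assert (Hei : idem e) by (apply idem_phi; auto).
  rewrite (idem_star _ e Hei) in Hee, Hee'. congruence.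
Qed.

Lemma rel_mono g x y w v : idem x -> idem w -> w <> 0 -> le w x -> rel g x y -> rel g w v -> le v y.
Proof.
  intros Hx Hw Hw0 Hle H H'.
  destruct H as [s [H1 [H2 [H3 H4]]]].
  assert (Hws : le w (s^* * s)) by (eapply le_trans'; eassumption).
  assert (Hv : v = s * w * s^*).
  { apply (rel_fun g w); auto. exists s. auto. }
  subst v y. unfold sleq.
  replace (s * w * s^* * (s * x * s^*)) with (s * (w * (s^* * s)) * x * s^*) by (nrm; reflexivity).
  rewrite <- Hws. unfold sleq in Hle. rewrite <- (sa S s w x), <- Hle. reflexivity.
Qed.

Lemma rel_comp s t x y z : idem x -> x <> 0 -> rel t x y -> rel s y z -> rel (s ** t) x z.
Proof.
  intros Hx Hx0 H H'.
  assert (Hy0 := rel_zero _ _ _ Hx Hx0 H).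
  destruct (rel_img _ _ _ Hx H) as [Hy _].
  assert (Hz0 := rel_zero _ _ _ Hy Hy0 H').
  destruct (rel_back _ _ _ Hx H) as [u [U1 [U2 [U3 [U4 [U5 U6]]]]]].
  destruct (rel_back _ _ _ Hy H') as [v [V1 [V2 [V3 [V4 [V5 V6]]]]]].
  assert (Hz : z = v * u * x * (v * u)^*).
  { rewrite star_mul. rewrite V4, U4. nrm. reflexivity. }
  assert (Hw0 : v * u <> 0).
  { intro Hw. apply Hz0. rewrite Hz, Hw. rewrite !szero_l. reflexivity. }
  exists (v * u). repeat split; auto.
  - rewrite phi_mul by auto. rewrite V2, U2. reflexivity.
  - rewrite star_mul. unfold sleq. rewrite <- U5 at 2.
    replace (u^* * y * u * (u^* * v^* * (v * u))) with (u^* * ((y * (u * u^*)) * (v^* * v)) * u) by (nrm; reflexivity).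
    rewrite <- U6. unfold sleq in V3. rewrite <- V3. symmetry. exact U5.
Qed.

Lemma rel_dom g t x y : idem x -> rel g x y -> E t x -> E (g ** t) y.
Proof.
  intros Hx H Ht.
  destruct (rel_img _ _ _ Hx H) as [Hy _].
  destruct (classic (x = 0)) as [Hx0|Hx0].
  { destruct H as [s [_ [_ [_ H4]]]]. subst. rewrite szero_r, szero_l. apply Eg_zero. }
  assert (Hy0 := rel_zero _ _ _ Hx Hx0 H).
  destruct (Eg_elim _ _ Ht Hx0) as [r [R1 [R2 R3]]].
  destruct (rel_back _ _ _ Hx H) as [s [H1 [H2 [H3 [H4 [H5 H6]]]]]].
  assert (Hle : le y ((s * r) * (s * r)^*)).
  { rewrite star_mul. unfold sleq. subst y.
    replace (s * x * s^* * (s * r * (r^* * s^*))) with (s * (x * (s^* * s)) * (r * r^*) * s^*) by (nrm; reflexivity).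
    rewrite <- H3. unfold sleq in R3. rewrite <- (sa S s x (r * r^*)), <- R3. reflexivity. }
  assert (Hw0 : s * r <> 0).
  { intro Hw. apply Hy0. rewrite Hle, Hw. rewrite szero_l, szero_r. reflexivity. }
  apply (Eg_intro _ (s * r)); auto. rewrite phi_mul by auto. rewrite H2, R2. reflexivity.
Qed.

Lemma rel_one x y : idem x -> x <> 0 -> (rel (gone G) x y <-> y = x).
Proof.
  intros Hx Hx0. split.
  - intros [s [H1 [H2 [H3 H4]]]].
    assert (Hs : idem s) by (apply idem_phi; auto).
    rewrite (idem_star _ _ Hs) in H3, H4. subst y.
    unfold sleq in H3. unfold is_idem in Hs. rewrite Hs in H3. rewrite (idem_comm _ s x Hs Hx). rewrite (idem_r _ _ _ Hs). symmetry. exact H3.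
  - intro Hy. subst y. exists x. repeat split; auto.
    + apply phi_idem; auto.
    + rewrite (idem_star _ _ Hx). unfold sleq. unfold is_idem in Hx. rewrite !Hx. reflexivity.
    + rewrite (idem_star _ _ Hx). cl Hx. reflexivity.
Qed.

End Rel.

End Rel.
Import Rel.

Module Top.

Definition cfilter {B : Type} (P : B -> Prop) (l : list B) : list B :=
  filter (fun b => if excluded_middle_informative (P b) then true else false) l.

Lemma cfilter_In {B : Type} (P : B -> Prop) l b : In b (cfilter P l) <-> In b l /\ P b.
Proof.
  unfold cfilter. rewrite filter_In. destruct (excluded_middle_informative (P b)); intuition congruence.
Qed.

Lemma pred_ext {B : Type} (p q : B -> Prop) : (forall x, p x <-> q x) -> p = q.
Proof. intro H. apply functional_extensionality. intro x. apply propositional_extensionality. apply H. Qed.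

Section Gen.
Variable A : Type.
Variable m : A -> A -> A.

Record FH (P Q : A -> Prop) (DP DQ : (A -> Prop) -> Prop) (F H : (A -> Prop) -> (A -> Prop)) : Prop := {
  fh_F : forall x, is_filter m P x -> DP x -> is_filter m Q (F x) /\ DQ (F x) /\ H (F x) = x;
  fh_H : forall z, is_filter m Q z -> DQ z -> is_filter m P (H z) /\ DP (H z) /\ F (H z) = z;
  fh_Fmon : forall x x', (forall a, x a -> x' a) -> forall a, F x a -> F x' a;
  fh_Hmon : forall z z', (forall a, z a -> z' a) -> forall a, H z a -> H z' a;
  fh_DP : forall x x', DP x -> (forall a, x a -> x' a) -> DP x';
  fh_DQ : forall z z', DQ z -> (forall a, z a -> z' a) -> DQ z';
  fh_Fc : forall x, is_filter m P x -> DP x -> forall xs ys, basic xs ys (F x) ->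
    exists xs' ys', basic xs' ys' x /\ forall x', is_filter m P x' -> basic xs' ys' x' -> DP x' /\ basic xs ys (F x');
  fh_Hc : forall z, is_filter m Q z -> DQ z -> forall xs ys, basic xs ys (H z) ->
    exists xs' ys', basic xs' ys' z /\ forall z', is_filter m Q z' -> basic xs' ys' z' -> DQ z' /\ basic xs ys (H z')
}.

Lemma FH_flip P Q DP DQ F H : FH P Q DP DQ F H -> FH Q P DQ DP H F.
Proof. intros [a b c d e f g h]. constructor; assumption. Qed.

Lemma tight_filter P x : is_tight m P x -> is_filter m P x.
Proof. intros [H _]. exact H. Qed.
Lemma ultra_filter P x : is_ultrafilter m P x -> is_filter m P x.
Proof. intros [H _]. exact H. Qed.
Lemma Tc_tight P U x : Tc m P U -> U x -> is_tight m P x.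
Proof. intros [[H _] _] Hx. apply H. exact Hx. Qed.

Section FHs.
Variables (P Q : A -> Prop) (DP DQ : (A -> Prop) -> Prop) (F H : (A -> Prop) -> (A -> Prop)).
Hypothesis fh : FH P Q DP DQ F H.

Lemma FH_ultra x : is_ultrafilter m P x -> DP x -> is_ultrafilter m Q (F x).
Proof.
  intros [Hf Hmax] HD. destruct (fh_F _ _ _ _ _ _ fh x Hf HD) as [HFf [HFD HHF]].
  split; [exact HFf|]. intros F' HF' Hsub.
  assert (HD' : DQ F') by (eapply (fh_DQ _ _ _ _ _ _ fh); eassumption).
  destruct (fh_H _ _ _ _ _ _ fh F' HF' HD') as [HHf [HHD HFH]].
  assert (Hs : forall a, x a -> H F' a).
  { intros a Ha. rewrite <- HHF in Ha. eapply (fh_Hmon _ _ _ _ _ _ fh); eassumption. }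
  specialize (Hmax _ HHf Hs).
  intros a Ha. rewrite <- HFH in Ha. eapply (fh_Fmon _ _ _ _ _ _ fh); eassumption.
Qed.

Lemma FH_tight x : is_tight m P x -> DP x -> is_tight m Q (F x).
Proof.
  intros [Hf Ht] HD. destruct (fh_F _ _ _ _ _ _ fh x Hf HD) as [HFf [HFD HHF]].
  split; [exact HFf|]. intros xs ys Hb.
  destruct (fh_Fc _ _ _ _ _ _ fh x Hf HD xs ys Hb) as [xs' [ys' [Hb' Hall]]].
  destruct (Ht _ _ Hb') as [U [HU HbU]].
  destruct (Hall U (ultra_filter _ _ HU) HbU) as [HDU HbFU].
  exists (F U). split; [|exact HbFU]. apply FH_ultra; assumption.
Qed.

Lemma open_pre U : open_in (is_tight m Q) U -> open_in (is_tight m P) (fun x => is_tight m P x /\ DP x /\ U (F x)).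
Proof.
  intros [HUt HUo]. split. intros x [Hx _]. exact Hx.
  intros x [Hxt [HxD HxU]].
  destruct (HUo _ HxU) as [xs [ys [Hb Hall]]].
  destruct (fh_Fc _ _ _ _ _ _ fh x (tight_filter _ _ Hxt) HxD xs ys Hb) as [xs' [ys' [Hb' Hall']]].
  exists xs', ys'. split; [exact Hb'|]. intros eta Heta Hbe.
  destruct (Hall' eta (tight_filter _ _ Heta) Hbe) as [HD' Hb''].
  split; [exact Heta|]. split; [exact HD'|]. apply Hall; [|exact Hb''].
  apply FH_tight; assumption.
Qed.
End FHs.

Lemma Tc_pre P Q DP DQ F H U : FH P Q DP DQ F H -> Tc m Q U -> (forall z, U z -> DQ z) ->
  Tc m P (fun x => is_tight m P x /\ DP x /\ U (F x)).
Proof.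
  intros fh [HUo HUc] HUD. split. apply (open_pre _ _ _ _ _ _ fh). exact HUo.
  split. intros x [Hx _]. exact Hx.
  intros I C HC Hcov.
  assert (fh' := FH_flip _ _ _ _ _ _ fh).
  set (C' := fun i => fun z => is_tight m Q z /\ DQ z /\ C i (H z)).
  assert (HC' : forall i, open_in (is_tight m Q) (C' i)).
  { intro i. apply (open_pre _ _ _ _ _ _ fh'). apply HC. }
  assert (Hcov' : forall z, U z -> exists i, C' i z).
  { intros z Hz. assert (Hzt : is_tight m Q z) by (apply (proj1 HUo); exact Hz).
    assert (HzD := HUD z Hz).
    destruct (fh_H _ _ _ _ _ _ fh z (tight_filter _ _ Hzt) HzD) as [_ [HHD HFH]].
    destruct (Hcov (H z)) as [i Hi].
    { split. apply (FH_tight _ _ _ _ _ _ fh'); assumption. split. exact HHD. rewrite HFH. exact Hz. }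
    exists i. unfold C'. auto. }
  destruct (proj2 HUc I C' HC' Hcov') as [l Hl].
  exists l. intros x [Hxt [HxD HxU]].
  destruct (Hl _ HxU) as [i [Hil Hi]]. exists i. split; [exact Hil|].
  destruct Hi as [_ [_ Hi]].
  destruct (fh_F _ _ _ _ _ _ fh x (tight_filter _ _ Hxt) HxD) as [_ [_ HHF]].
  rewrite HHF in Hi. exact Hi.
Qed.

Lemma Tc_img P Q DP DQ F H V : FH P Q DP DQ F H -> Tc m P V -> (forall x, V x -> DP x) ->
  Tc m Q (fun z => exists x, V x /\ DP x /\ z = F x).
Proof.
  intros fh HV HVD.
  assert (fh' := FH_flip _ _ _ _ _ _ fh).
  assert (Ht := Tc_pre _ _ _ _ _ _ V fh' HV HVD).
  replace (fun z => exists x, V x /\ DP x /\ z = F x) with (fun z => is_tight m Q z /\ DQ z /\ V (H z)).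
  exact Ht.
  apply pred_ext. intro z. split.
  - intros [Hzt [HzD HzV]]. exists (H z).
    destruct (fh_H _ _ _ _ _ _ fh z (tight_filter _ _ Hzt) HzD) as [_ [HHD HFH]].
    auto.
  - intros [x [Hx [HxD Hz]]]. subst z.
    assert (Hxt := Tc_tight _ _ _ HV Hx).
    destruct (fh_F _ _ _ _ _ _ fh x (tight_filter _ _ Hxt) HxD) as [_ [HFD HHF]].
    split. apply (FH_tight _ _ _ _ _ _ fh); assumption. split. exact HFD. rewrite HHF. exact Hx.
Qed.

Lemma compact_closed (X K : (A -> Prop) -> Prop) x :
  compact_in X K -> ~ K x ->
  exists xs ys, basic xs ys x /\ forall y, X y -> basic xs ys y -> ~ K y.
Proof.
  intros [HKX HK] HKx.
  set (C := fun (i : A * bool) => fun y => X y /\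
        (if snd i then x (fst i) /\ ~ y (fst i) else ~ x (fst i) /\ y (fst i))).
  assert (HC : forall i, open_in X (C i)).
  { intros [a b]. split. intros y [Hy _]. exact Hy.
    intros y [Hy Hb]. destruct b; simpl in Hb.
    - exists [], [a]. split. split. intros z []. intros z [<-|[]]. tauto.
      intros eta Heta [_ Hb2]. split; [exact Heta|]. simpl. split. tauto. apply Hb2. left; reflexivity.
    - exists [a], []. split. split. intros z [<-|[]]. tauto. intros z [].
      intros eta Heta [Hb1 _]. split; [exact Heta|]. simpl. split. tauto. apply Hb1. left; reflexivity. }
  assert (Hcov : forall y, K y -> exists i, C i y).
  { intros y Hy. assert (Hne : exists a, ~ (x a <-> y a)).
    { apply NNPP. intro Hn. apply HKx. replace x with y. exact Hy.
      apply pred_ext. intro a. apply NNPP. intro Ha. apply Hn. exists a. tauto. }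
    destruct Hne as [a Ha]. destruct (classic (x a)) as [Hxa|Hxa].
    - exists (a, true). unfold C. simpl. split. apply HKX; exact Hy. tauto.
    - exists (a, false). unfold C. simpl. split. apply HKX; exact Hy. tauto. }
  destruct (HK _ C HC Hcov) as [l Hl].
  exists (map fst (cfilter (fun i => snd i = true /\ x (fst i)) l)),
         (map fst (cfilter (fun i => snd i = false /\ ~ x (fst i)) l)).
  split.
  - split.
    + intros a Ha. apply in_map_iff in Ha. destruct Ha as [i [<- Hi]]. apply cfilter_In in Hi. tauto.
    + intros a Ha. apply in_map_iff in Ha. destruct Ha as [i [<- Hi]]. apply cfilter_In in Hi. tauto.
  - intros y Hy [Hb1 Hb2] HKy. destruct (Hl _ HKy) as [[a b] [Hi HCi]].
    destruct HCi as [_ HCi]. destruct b; simpl in HCi.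
    + apply (proj2 HCi). apply Hb1. apply in_map_iff. exists (a, true). split. reflexivity.
      apply cfilter_In. simpl. tauto.
    + apply (Hb2 a). apply in_map_iff. exists (a, false). split. reflexivity.
      apply cfilter_In. simpl. tauto. tauto.
Qed.

Lemma Tc_inter P V W : Tc m P V -> Tc m P W -> Tc m P (sinter V W).
Proof.
  intros [[HVt HVo] HVc] [[HWt HWo] HWc]. split.
  - split. intros x [Hx _]. apply HVt; exact Hx.
    intros x [HxV HxW]. destruct (HVo _ HxV) as [xs1 [ys1 [Hb1 H1]]].
    destruct (HWo _ HxW) as [xs2 [ys2 [Hb2 H2]]].
    exists (xs1 ++ xs2), (ys1 ++ ys2).
    assert (Hb : forall eta, basic (xs1 ++ xs2) (ys1 ++ ys2) eta -> basic xs1 ys1 eta /\ basic xs2 ys2 eta).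
    { intros eta [Ha Hb]. split; split; intros; [apply Ha|apply Hb|apply Ha|apply Hb]; apply in_app_iff; auto. }
    split.
    + destruct Hb1 as [Ha1 Hc1]. destruct Hb2 as [Ha2 Hc2].
      split; intros a Ha; apply in_app_iff in Ha; destruct Ha; auto.
    + intros eta Heta Hbe. destruct (Hb _ Hbe). split; auto.
  - split. intros x [Hx _]. apply HVt; exact Hx.
    intros I C HC Hcov.
    set (C' := fun (o : option I) => match o with Some i => C i | None => fun x => is_tight m P x /\ ~ W x end).
    assert (HC' : forall o, open_in (is_tight m P) (C' o)).
    { intros [i|]. apply HC. split. intros x [Hx _]. exact Hx.
      intros x [Hx HWx]. destruct (compact_closed _ _ x HWc HWx) as [xs [ys [Hb Hall]]].
      exists xs, ys. split. exact Hb. intros eta Heta Hbe. split. exact Heta. apply Hall; assumption. }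
    assert (Hcov' : forall x, V x -> exists o, C' o x).
    { intros x Hx. destruct (classic (W x)) as [HW|HW].
      - destruct (Hcov x (conj Hx HW)) as [i Hi]. exists (Some i). exact Hi.
      - exists None. simpl. split. apply HVt; exact Hx. exact HW. }
    destruct (proj2 HVc _ C' HC' Hcov') as [l Hl].
    exists (flat_map (fun o => match o with Some i => [i] | None => [] end) l).
    intros x [HxV HxW]. destruct (Hl _ HxV) as [[i|] [Hin Hi]].
    + exists i. split; [|exact Hi]. apply in_flat_map. exists (Some i). split. exact Hin. left; reflexivity.
    + destruct Hi as [_ Hi]. contradiction.
Qed.

Lemma Tc_union P V W : Tc m P V -> Tc m P W -> Tc m P (sunion V W).
Proof.
  intros [[HVt HVo] HVc] [[HWt HWo] HWc]. split.
  - split. intros x [Hx|Hx]; auto.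
    intros x [Hx|Hx].
    + destruct (HVo _ Hx) as [xs [ys [Hb Hall]]]. exists xs, ys. split. exact Hb. intros. left. auto.
    + destruct (HWo _ Hx) as [xs [ys [Hb Hall]]]. exists xs, ys. split. exact Hb. intros. right. auto.
  - split. intros x [Hx|Hx]; auto.
    intros I C HC Hcov.
    destruct (proj2 HVc I C HC (fun x Hx => Hcov x (or_introl Hx))) as [l1 H1].
    destruct (proj2 HWc I C HC (fun x Hx => Hcov x (or_intror Hx))) as [l2 H2].
    exists (l1 ++ l2). intros x [Hx|Hx].
    + destruct (H1 _ Hx) as [i [Hi Hc]]. exists i. split; auto. apply in_app_iff; auto.
    + destruct (H2 _ Hx) as [i [Hi Hc]]. exists i. split; auto. apply in_app_iff; auto.
Qed.

Lemma Tc_empty P : Tc m P (@sempty _).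
Proof.
  split. split. intros x []. intros x [].
  split. intros x []. intros I C _ _. exists []. intros x [].
Qed.

End Gen.

End Top.
Import Top.

Module Inst.

Section Inst.
Variable S : InvSemigroup.
Variable G : Grp.
Variable phi : S -> G.
Hypothesis Hphi : pure_grading S G phi.
Local Notation "x * y" := (smul S x y).
Local Notation "0" := (szero S).
Local Notation idem := (@is_idem S).
Local Notation le := (sleq S).
Local Notation E := (Eg S G phi).
Local Notation rel := (phig_rel S G phi).
Local Notation m := (smul S).

Definition rr (g : G) (xi : S -> Prop) : S -> Prop := fun x => xi x /\ E g x.
Definition up (z : S -> Prop) : S -> Prop := fun x => idem x /\ exists w, z w /\ le w x.
Definition meets (g : G) (xi : S -> Prop) : Prop := exists x, xi x /\ E g x.
Definition Fphi (g : G) (z : S -> Prop) : S -> Prop := fun y => exists x, z x /\ rel g x y.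

Lemma filt_sub P F x : is_filter m P F -> F x -> P x.
Proof. intros [H _] Hx. apply H. exact Hx. Qed.
Lemma filt_up P F x y : is_filter m P F -> F x -> P y -> le x y -> F y.
Proof. intros [_ [_ [_ [H _]]]] Hx Hy Hl. eapply H; eassumption. Qed.
Lemma filt_meet P F x y : is_filter m P F -> F x -> F y -> F (x * y).
Proof. intros [_ [_ [_ [_ H]]]] Hx Hy. apply H; assumption. Qed.
Lemma filt_nz P F x : is_filter m P F -> P 0 -> F x -> x <> 0.
Proof.
  intros Hf HP Hx H0. subst x. destruct Hf as [_ [_ [[y [Hy Hny]] [Hup _]]]].
  apply Hny. eapply Hup. exact Hx. exact Hy. apply le_zero.
Qed.
Lemma filt_ne P F : is_filter m P F -> exists x, F x.
Proof. intros [_ [H _]]. exact H. Qed.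

Lemma filtE_idem g F x : is_filter m (E g) F -> F x -> idem x.
Proof. intros Hf Hx. apply (Eg_idem S G phi g). eapply filt_sub; eassumption. Qed.
Lemma filtE_nz g F x : is_filter m (E g) F -> F x -> x <> 0.
Proof. intros Hf Hx. eapply filt_nz; eauto. apply Eg_zero. Qed.
Lemma filtI_nz F x : is_filter m idem F -> F x -> x <> 0.
Proof. intros Hf Hx. eapply filt_nz; eauto. apply zero_idem. Qed.


Lemma L_img g x y : idem x -> rel g x y -> idem y /\ E g y.
Proof. apply rel_img. Qed.
Lemma L_zero g x y : idem x -> x <> 0 -> rel g x y -> y <> 0.
Proof. apply rel_zero. Qed.
Lemma L_inv g x y : idem x -> rel g x y -> rel (ginv G g) y x.
Proof. apply rel_inv; auto. Qed.
Lemma L_exists g x : idem x -> x <> 0 -> E (ginv G g) x -> exists y, rel g x y.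
Proof. apply rel_exists; auto. Qed.
Lemma L_fun g x y y' : idem x -> x <> 0 -> rel g x y -> rel g x y' -> y = y'.
Proof. apply rel_fun; auto. Qed.
Lemma L_mono g x y w v : idem x -> idem w -> w <> 0 -> le w x -> rel g x y -> rel g w v -> le v y.
Proof. apply rel_mono; auto. Qed.
Lemma L_comp s t x y z : idem x -> x <> 0 -> rel t x y -> rel s y z -> rel (gmul G s t) x z.
Proof. apply rel_comp; auto. Qed.
Lemma L_dom g t x y : idem x -> rel g x y -> E t x -> E (gmul G g t) y.
Proof. apply rel_dom; auto. Qed.
Lemma L_down g x y : E g x -> idem y -> le y x -> E g y.
Proof. apply Eg_down. Qed.
Lemma L_eidem g x : E g x -> idem x.
Proof. apply Eg_idem. Qed.

Lemma I1 g : FH _ m idem (E g) (meets g) (fun _ => True) (rr g) up.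
Proof.
  constructor.
  - intros xi Hf [a [Ha HaE]]. split; [|split; [exact I|]].
    + split. intros x [_ Hx]. exact Hx.
      split. exists a. split; assumption.
      split. exists 0. split. apply Eg_zero. intros [H _]. eapply filtI_nz; eauto.
      split. intros x y [Hx HxE] Hy Hl. split; [|exact Hy]. eapply filt_up; eauto. eapply Eg_idem; eauto.
      intros x y [Hx HxE] [Hy HyE]. split. eapply filt_meet; eauto.
      apply (Eg_down S G phi g x). exact HxE. apply idem_mul; eapply filt_sub; eauto.
      apply le_mul_l; eapply filt_sub; eauto.
    + apply pred_ext. intro x. split.
      * intros [Hx [w [[Hw _] Hl]]]. eapply filt_up; eauto.
      * intro Hx. assert (Hxi : idem x) by (eapply filt_sub; eauto).
        assert (Hai : idem a) by (eapply filt_sub; eauto).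
        split; [exact Hxi|]. exists (x * a). split. split. eapply filt_meet; eauto.
        apply (Eg_down S G phi g a); auto. apply idem_mul; auto. apply le_mul_r; auto.
        apply le_mul_l; auto.
  - intros z Hf _. destruct (filt_ne _ _ Hf) as [a Ha]. split; [|split].
    + split. intros x [Hx _]. exact Hx.
      split. exists a. split. eapply filtE_idem; eauto. exists a. split. exact Ha. apply le_refl. eapply filtE_idem; eauto.
      split. exists 0. split. apply zero_idem. intros [_ [w [Hw Hl]]]. apply le_zero_eq in Hl. subst w.
      eapply filtE_nz; eauto.
      split. intros x y [Hx [w [Hw Hl]]] Hy Hl'. split. exact Hy. exists w. split. exact Hw. eapply le_trans'; eauto.
      intros x y [Hx [w [Hw Hl]]] [Hy [w' [Hw' Hl']]]. split. apply idem_mul; auto.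
      exists (w * w'). split. eapply filt_meet; eauto. apply le_meet.
      eapply le_trans'. apply le_mul_l; eapply filtE_idem; eauto. exact Hl.
      eapply le_trans'. apply le_mul_r; eapply filtE_idem; eauto. exact Hl'.
    + exists a. split. split. eapply filtE_idem; eauto. exists a. split. exact Ha. apply le_refl. eapply filtE_idem; eauto.
      eapply filt_sub; eauto.
    + apply pred_ext. intro x. split.
      * intros [[Hx [w [Hw Hl]]] HE]. eapply filt_up; eauto.
      * intro Hx. split. split. eapply filtE_idem; eauto. exists x. split. exact Hx. apply le_refl. eapply filtE_idem; eauto.
        eapply filt_sub; eauto.
  - intros x x' Hs a [Ha HE]. split; auto.
  - intros z z' Hs a [Ha [w [Hw Hl]]]. split; auto. exists w. auto.
  - intros x x' [a [Ha HE]] Hs. exists a. auto.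
  - auto.
  - intros xi Hf [a [Ha HaE]] xs ys [Hb1 Hb2].
    exists (a :: xs), (cfilter (E g) ys). split.
    + split. intros x [<-|Hx]. exact Ha. apply Hb1. exact Hx.
      intros y Hy. apply cfilter_In in Hy. intro Hy'. apply (Hb2 y). tauto. split; tauto.
    + intros x' Hf' [Hc1 Hc2]. split. exists a. split. apply Hc1. left; reflexivity. exact HaE.
      split. intros x Hx. split. apply Hc1. right; exact Hx. apply (Hb1 x Hx).
      intros y Hy [Hy1 Hy2]. apply (Hc2 y). apply cfilter_In. auto. exact Hy1.
  - intros z Hf _ xs ys [Hb1 Hb2]. destruct (filt_ne _ _ Hf) as [a Ha].
    assert (Hai : idem a) by (eapply filtE_idem; eauto).
    assert (HaE : E g a) by (eapply filt_sub; eauto).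
    exists (a :: map (fun x => x * a) xs), (map (fun y => y * a) (cfilter idem ys)). split.
    + split.
      * intros x [<-|Hx]. exact Ha. apply in_map_iff in Hx. destruct Hx as [x0 [<- Hx0]].
        destruct (Hb1 x0 Hx0) as [Hxi [w [Hw Hl]]].
        assert (Hwi : idem w) by (eapply filtE_idem; eauto).
        apply (filt_up (E g) z (w * a)). exact Hf. eapply filt_meet; eauto.
        apply (Eg_down S G phi g a); auto. apply idem_mul; auto. apply le_mul_r; auto.
        apply le_meet. eapply le_trans'. apply le_mul_l; auto. exact Hl. apply le_mul_r; auto.
      * intros y Hy. apply in_map_iff in Hy. destruct Hy as [y0 [<- Hy0]]. apply cfilter_In in Hy0.
        destruct Hy0 as [Hy0 Hyi]. intro Hz. apply (Hb2 y0 Hy0). split. exact Hyi.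
        exists (y0 * a). split. exact Hz. apply le_mul_l; auto.
    + intros z' Hf' [Hc1 Hc2]. assert (Ha' : z' a) by (apply Hc1; left; reflexivity).
      split. exact I. split.
      * intros x Hx. destruct (Hb1 x Hx) as [Hxi _]. split. exact Hxi. exists (x * a). split.
        apply Hc1. right. apply in_map_iff. exists x. auto. apply le_mul_l; auto.
      * intros y Hy [Hyi [w [Hw Hl]]]. apply (Hc2 (y * a)). apply in_map_iff. exists y. split. reflexivity.
        apply cfilter_In. auto.
        assert (Hwi : idem w) by (eapply filtE_idem; eauto).
        apply (filt_up (E g) z' (w * a)). exact Hf'. eapply filt_meet; eauto.
        apply (Eg_down S G phi g a); auto. apply idem_mul; auto. apply le_mul_r; auto.
        apply le_meet. eapply le_trans'. apply le_mul_l; auto. exact Hl. apply le_mul_r; auto.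
Qed.


Definition phif (g : G) (x : S) : S :=
  match excluded_middle_informative (exists y, rel g x y) with
  | left H => proj1_sig (constructive_indefinite_description _ H)
  | right _ => x
  end.
Lemma phif_spec g x : (exists y, rel g x y) -> rel g x (phif g x).
Proof.
  intro H. unfold phif. destruct (excluded_middle_informative _) as [H'|H'].
  apply (proj2_sig (constructive_indefinite_description _ H')). contradiction.
Qed.

Lemma rel_inv' g x y : idem x -> rel (ginv G g) x y -> rel g y x.
Proof. intros Hx H. rewrite <- (ginv_ginv G g). apply L_inv; auto. Qed.

Lemma rel_exists' g y : idem y -> y <> 0 -> E g y -> exists x, rel (ginv G g) y x.
Proof. intros. apply L_exists; auto. rewrite ginv_ginv. auto. Qed.

Section FphiS.
Variable g : G.

Lemma Fphi_up z y y' : is_filter m (E (ginv G g)) z -> Fphi g z y -> E g y' -> le y y' -> Fphi g z y'.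
Proof.
  intros Hf [x [Hx Hr]] Hy' Hl.
  assert (Hxi := filtE_idem _ _ _ Hf Hx). assert (Hx0 := filtE_nz _ _ _ Hf Hx).
  destruct (L_img _ _ _ Hxi Hr) as [Hyi HyE].
  assert (Hy0 := L_zero _ _ _ Hxi Hx0 Hr).
  assert (Hy'i := L_eidem _ _ Hy').
  assert (Hy'0 : y' <> 0). { intro H0. subst y'. apply Hy0. apply le_zero_eq. exact Hl. }
  destruct (rel_exists' g y' Hy'i Hy'0 Hy') as [x' Hr'].
  assert (Hx'i : idem x' /\ E (ginv G g) x') by (eapply L_img; eauto).
  assert (Hinv := L_inv _ _ _ Hxi Hr).
  assert (Hle : le x x') by (exact (L_mono (ginv G g) y' x' y x Hy'i Hyi Hy0 Hl Hr' Hinv)).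
  exists x'. split. eapply filt_up; eauto. tauto.
  apply rel_inv'; auto.
Qed.

Lemma Fphi_filter z : is_filter m (E (ginv G g)) z -> is_filter m (E g) (Fphi g z).
Proof.
  intro Hf. split; [|split; [|split; [|split]]].
  - intros y [x [Hx Hr]]. eapply L_img; eauto. eapply filtE_idem; eauto.
  - destruct (filt_ne _ _ Hf) as [x Hx].
    destruct (L_exists g x) as [y Hy]; eauto. eapply filtE_idem; eauto. eapply filtE_nz; eauto.
    eapply filt_sub; eauto.
    exists y, x. auto.
  - exists 0. split. apply Eg_zero. intros [x [Hx Hr]]. eapply L_zero; eauto.
    eapply filtE_idem; eauto. eapply filtE_nz; eauto.
  - intros y y' Hy Hy' Hl. eapply Fphi_up; eauto.
  - intros y y' [x [Hx Hr]] [x' [Hx' Hr']].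
    assert (Hxi := filtE_idem _ _ _ Hf Hx). assert (Hx'i := filtE_idem _ _ _ Hf Hx').
    assert (Hw : z (x * x')) by (eapply filt_meet; eauto).
    assert (Hwi := filtE_idem _ _ _ Hf Hw). assert (Hw0 := filtE_nz _ _ _ Hf Hw).
    destruct (L_exists g (x * x')) as [v Hv]; auto. eapply filt_sub; eauto.
    destruct (L_img _ _ _ Hxi Hr) as [Hyi HyE].
    destruct (L_img _ _ _ Hx'i Hr') as [Hy'i Hy'E].
    apply (Fphi_up z v). exact Hf. exists (x * x'). auto.
    apply (L_down g y); auto. apply idem_mul; auto. apply le_mul_l; auto.
    apply le_meet.
    eapply (L_mono g x y (x * x') v); eauto. apply le_mul_l; auto.
    eapply (L_mono g x' y' (x * x') v); eauto. apply le_mul_r; auto.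
Qed.

Lemma Fphi_inv z : is_filter m (E (ginv G g)) z -> Fphi (ginv G g) (Fphi g z) = z.
Proof.
  intro Hf. apply pred_ext. intro x. split.
  - intros [y [[x0 [Hx0 Hr0]] Hr]].
    assert (Hx0i := filtE_idem _ _ _ Hf Hx0). assert (Hx00 := filtE_nz _ _ _ Hf Hx0).
    destruct (L_img _ _ _ Hx0i Hr0) as [Hyi _].
    assert (Hy0 := L_zero _ _ _ Hx0i Hx00 Hr0).
    assert (H1 := L_inv _ _ _ Hx0i Hr0).
    assert (x0 = x) by (eapply L_fun; eauto). subst. exact Hx0.
  - intro Hx. assert (Hxi := filtE_idem _ _ _ Hf Hx). assert (Hx0 := filtE_nz _ _ _ Hf Hx).
    destruct (L_exists g x) as [y Hy]; auto. eapply filt_sub; eauto.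
    exists y. split. exists x. auto. apply L_inv; auto.
Qed.

Lemma Fphi_cont z : is_filter m (E (ginv G g)) z -> forall xs ys, basic xs ys (Fphi g z) ->
  exists xs' ys', basic xs' ys' z /\ forall z', is_filter m (E (ginv G g)) z' -> basic xs' ys' z' ->
    True /\ basic xs ys (Fphi g z').
Proof.
  intros Hf xs ys [Hb1 Hb2].
  exists (map (phif (ginv G g)) xs), (map (phif (ginv G g)) (cfilter (fun y => E g y /\ y <> 0) ys)).
  assert (Key : forall x, Fphi g z x -> rel (ginv G g) x (phif (ginv G g) x) /\ z (phif (ginv G g) x)).
  { intros x [x0 [Hx0 Hr]].
    assert (Hx0i := filtE_idem _ _ _ Hf Hx0). assert (Hx00 := filtE_nz _ _ _ Hf Hx0).
    destruct (L_img _ _ _ Hx0i Hr) as [Hxi _].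
    assert (Hx0' := L_zero _ _ _ Hx0i Hx00 Hr).
    assert (H1 := L_inv _ _ _ Hx0i Hr).
    assert (H2 : rel (ginv G g) x (phif (ginv G g) x)) by (apply phif_spec; eauto).
    split. exact H2. replace (phif (ginv G g) x) with x0. exact Hx0. eapply L_fun; eauto. }
  split. split.
  - intros x Hx. apply in_map_iff in Hx. destruct Hx as [x0 [<- Hx0]]. apply Key. apply Hb1. exact Hx0.
  - intros x Hx. apply in_map_iff in Hx. destruct Hx as [y [<- Hy]]. apply cfilter_In in Hy.
    destruct Hy as [Hy [HyE Hy0]]. intro Hz. apply (Hb2 y Hy).
    assert (Hyi := L_eidem _ _ HyE).
    assert (H2 : rel (ginv G g) y (phif (ginv G g) y)) by (apply phif_spec; apply rel_exists'; auto).
    exists (phif (ginv G g) y). split. exact Hz. exact (rel_inv' g y _ Hyi H2).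
  - intros z' Hf' [Hc1 Hc2]. split. exact I. split.
    + intros x Hx. destruct (Key x (Hb1 x Hx)) as [H1 _].
      exists (phif (ginv G g) x). split. apply Hc1. apply in_map_iff. exists x. auto.
      exact (rel_inv' g x _ (L_eidem g x (filt_sub _ _ _ (Fphi_filter z Hf) (Hb1 x Hx))) H1).
    + intros y Hy [x0 [Hx0 Hr]].
      assert (Hx0i := filtE_idem _ _ _ Hf' Hx0). assert (Hx00 := filtE_nz _ _ _ Hf' Hx0).
      destruct (L_img _ _ _ Hx0i Hr) as [Hyi HyE].
      assert (Hy0 := L_zero _ _ _ Hx0i Hx00 Hr).
      assert (H1 := L_inv _ _ _ Hx0i Hr).
      assert (H2 : rel (ginv G g) y (phif (ginv G g) y)) by (apply phif_spec; eauto).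
      assert (Heq : phif (ginv G g) y = x0) by (eapply L_fun; eauto).
      apply (Hc2 (phif (ginv G g) y)). apply in_map_iff. exists y. split. reflexivity.
      apply cfilter_In. auto. rewrite Heq. exact Hx0.
Qed.
End FphiS.

Lemma I2 g : FH _ m (E (ginv G g)) (E g) (fun _ => True) (fun _ => True) (Fphi g) (Fphi (ginv G g)).
Proof.
  constructor.
  - intros x Hf _. split. apply Fphi_filter; auto. split. exact I. apply Fphi_inv; auto.
  - intros z Hf _. rewrite <- (ginv_ginv G g) in Hf.
    split. apply Fphi_filter; auto. split. exact I.
    assert (H := Fphi_inv (ginv G g) z Hf). rewrite ginv_ginv in H. exact H.
  - intros x x' Hs a [b [Hb Hr]]. exists b. auto.
  - intros x x' Hs a [b [Hb Hr]]. exists b. auto.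
  - auto.
  - auto.
  - intros x Hf _. apply Fphi_cont; auto.
  - intros z Hf _ xs ys Hb. rewrite <- (ginv_ginv G g) in Hf.
    destruct (Fphi_cont (ginv G g) z Hf xs ys Hb) as [xs' [ys' [H1 H2]]].
    exists xs', ys'. split. exact H1. intros z' Hf' Hb'. apply H2; auto. rewrite ginv_ginv. exact Hf'.
Qed.

End Inst.

End Inst.
Import Inst.

Module Main.

Section Main.
Variable S : InvSemigroup.
Variable G : Grp.
Variable phi : S -> G.
Hypothesis Hphi : pure_grading S G phi.
Local Notation "x * y" := (smul S x y).
Local Notation "0" := (szero S).
Local Notation idem := (@is_idem S).
Local Notation le := (sleq S).
Local Notation E := (Eg S G phi).
Local Notation rel := (phig_rel S G phi).
Local Notation m := (smul S).
Local Notation "a ** b" := (gmul G a b) (at level 40, left associativity).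
Local Notation tightE := (is_tight m idem).
Local Notation filtE := (is_filter m idem).
Local Notation rr := (rr S G phi).
Local Notation up := (up S).
Local Notation meets := (meets S G phi).
Local Notation Fphi := (Fphi S G phi).
Local Notation Ig := (Ig S G phi).
Local Notation psi := (psi S G phi).

Definition RelE g eta xi := rr g xi = Fphi g (rr (ginv G g) eta).
Definition supp g (V : (S -> Prop) -> Prop) := forall xi, V xi -> meets g xi.

Lemma up_rr g xi : filtE xi -> meets g xi -> up (rr g xi) = xi.
Proof. intros. apply (fh_F _ _ _ _ _ _ _ _ (I1 S G phi g)); auto. Qed.
Lemma rr_filter g xi : filtE xi -> meets g xi -> is_filter m (E g) (rr g xi).
Proof. intros. apply (fh_F _ _ _ _ _ _ _ _ (I1 S G phi g)); auto. Qed.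
Lemma rr_up g z : is_filter m (E g) z -> rr g (up z) = z.
Proof. intros. apply (fh_H _ _ _ _ _ _ _ _ (I1 S G phi g)); auto. Qed.
Lemma up_meets g z : is_filter m (E g) z -> meets g (up z).
Proof. intros. apply (fh_H _ _ _ _ _ _ _ _ (I1 S G phi g)); auto. Qed.

Lemma gid1 s t : t ** ginv G (s ** t) = ginv G s.
Proof. rewrite ginv_mul, gmul_assoc, ginv_r, gone_l. reflexivity. Qed.
Lemma gid2 s t : ginv G s ** (s ** t) = t.
Proof. rewrite gmul_assoc, ginv_l, gone_l. reflexivity. Qed.

Lemma filtE_mem xi x : filtE xi -> xi x -> idem x /\ x <> 0.
Proof. intros Hf Hx. split. eapply filt_sub; eauto. eapply filtI_nz; eauto. Qed.

Lemma psi_char g V xi : psi g V xi <-> tightE xi /\ meets g xi /\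
  exists eta, V eta /\ meets (ginv G g) eta /\ RelE g eta xi.
Proof.
  unfold psi, iota, hatphi, rho, RelE. split.
  - intros [Ht [Hm [zeta [[eta [HV [Hme Heq]]] Hrel]]]].
    split; [exact Ht|]. split; [exact Hm|]. exists eta. split; [exact HV|]. split; [exact Hme|].
    apply pred_ext. intro y. unfold Inst.rr, Inst.Fphi. rewrite Hrel. split.
    + intros [x [Hx Hr]]. exists x. split; [apply Heq; exact Hx | exact Hr].
    + intros [x [Hx Hr]]. exists x. split; [apply Heq; exact Hx | exact Hr].
  - intros [Ht [Hm [eta [HV [Hme Heq]]]]].
    split; [exact Ht|]. split; [exact Hm|]. exists (rr (ginv G g) eta). split.
    + exists eta. split; [exact HV|]. split; [exact Hme|]. intro x. unfold Inst.rr. tauto.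
    + intro y. change ((fun y => xi y /\ E g y) y <-> (fun y => exists x, rr (ginv G g) eta x /\ rel g x y) y).
      unfold Inst.rr, Inst.Fphi in Heq. rewrite Heq. tauto.
Qed.

Lemma R1 g eta : tightE eta -> meets (ginv G g) eta ->
  exists xi, tightE xi /\ meets g xi /\ RelE g eta xi.
Proof.
  intros Ht Hm. exists (up (Fphi g (rr (ginv G g) eta))).
  assert (T1 := FH_tight _ _ _ _ _ _ _ _ (I1 S G phi (ginv G g)) eta Ht Hm).
  assert (T2 := FH_tight _ _ _ _ _ _ _ _ (I2 S G phi Hphi g) _ T1 I).
  assert (F2 := tight_filter _ _ _ _ T2).
  split. eapply FH_tight. apply FH_flip. apply I1. exact T2. exact I.
  split. apply up_meets; auto. unfold RelE. apply rr_up; auto.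
Qed.

Lemma R2 g eta xi xi' : filtE xi -> filtE xi' -> meets g xi -> meets g xi' ->
  RelE g eta xi -> RelE g eta xi' -> xi = xi'.
Proof.
  unfold RelE. intros. rewrite <- (up_rr g xi), <- (up_rr g xi') by auto. congruence.
Qed.

Lemma R3 g eta xi : filtE eta -> meets (ginv G g) eta -> RelE g eta xi -> RelE (ginv G g) xi eta.
Proof.
  unfold RelE. intros Hf Hm H. rewrite ginv_ginv. rewrite H. symmetry. apply Fphi_inv; auto.
  apply rr_filter; auto.
Qed.

Lemma INJ g eta eta' xi : filtE eta -> filtE eta' -> meets (ginv G g) eta -> meets (ginv G g) eta' ->
  RelE g eta xi -> RelE g eta' xi -> eta = eta'.
Proof.
  intros. apply (R2 (ginv G g) xi); auto; apply R3; auto.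
Qed.

Lemma R5 g t eta xi : filtE eta -> meets (ginv G g) eta -> meets t eta -> RelE g eta xi -> meets (g ** t) xi.
Proof.
  intros Hf [a [Ha HaE]] [b [Hb HbE]] H.
  destruct (filtE_mem _ _ Hf Ha) as [Hai _]. destruct (filtE_mem _ _ Hf Hb) as [Hbi _].
  assert (Hc : eta (a * b)) by (eapply filt_meet; eauto).
  destruct (filtE_mem _ _ Hf Hc) as [Hci Hc0].
  assert (Hc1 : E (ginv G g) (a * b)) by (eapply L_down; eauto; apply le_mul_l; auto).
  assert (Hc2 : E t (a * b)) by (eapply L_down; eauto; apply le_mul_r; auto).
  destruct (L_exists S G phi Hphi g (a * b) Hci Hc0 Hc1) as [y Hy].
  assert (Hxy : rr g xi y). { unfold RelE in H. rewrite H. exists (a * b). split. split; auto. exact Hy. }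
  exists y. split. apply Hxy. eapply L_dom; eauto.
Qed.

Lemma R4 s t eta zeta xi : filtE eta -> filtE zeta -> filtE xi ->
  meets (ginv G t) eta -> meets s xi ->
  RelE t eta zeta -> RelE s zeta xi -> RelE (s ** t) eta xi.
Proof.
  intros Hfe Hfz Hfx [a [Ha HaE]] [b [Hb HbE]] H1 H2. unfold RelE in *.
  apply pred_ext. intro y. split.
  - intros [Hy HyE]. unfold Inst.Fphi, Inst.rr.
    destruct (filtE_mem _ _ Hfx Hy) as [Hyi Hy0].
    destruct (filtE_mem _ _ Hfx Hb) as [Hbi _].
    assert (Hy' : xi (y * b)) by (eapply filt_meet; eauto).
    destruct (filtE_mem _ _ Hfx Hy') as [Hy'i Hy'0].
    assert (Hy'1 : E s (y * b)) by (eapply L_down; eauto; apply le_mul_r; auto).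
    assert (Hy'2 : E (s ** t) (y * b)) by (eapply L_down; eauto; apply le_mul_l; auto).
    assert (Hr : rr s xi (y * b)) by (split; auto).
    rewrite H2 in Hr. destruct Hr as [z0 [[Hz0 Hz0E] Hrz]].
    destruct (filtE_mem _ _ Hfz Hz0) as [Hz0i Hz00].
    assert (Hinv := L_inv S G phi Hphi _ _ _ Hz0i Hrz).
    assert (Hz0t : E t z0). { rewrite <- (gid2 s t). exact (L_dom S G phi Hphi (ginv G s) (s ** t) (y*b) z0 Hy'i Hinv Hy'2). }
    assert (Hr2 : rr t zeta z0) by (split; auto).
    rewrite H1 in Hr2. destruct Hr2 as [x0 [[Hx0 Hx0E] Hrx]].
    destruct (filtE_mem _ _ Hfe Hx0) as [Hx0i Hx00].
    assert (Hc := L_comp S G phi Hphi s t x0 z0 (y * b) Hx0i Hx00 Hrx Hrz).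
    assert (Hyy : exists x1, rel (ginv G (s ** t)) y x1) by (apply rel_exists'; auto).
    destruct Hyy as [x1 Hx1].
    assert (Hx1' := rel_inv' S G phi Hphi _ _ _ Hyi Hx1).
    destruct (L_img S G phi _ _ _ Hyi Hx1) as [Hx1i Hx1E].
    assert (Hinv2 := L_inv S G phi Hphi _ _ _ Hx0i Hc).
    assert (Hle : le x0 x1).
    { exact (L_mono S G phi Hphi _ y x1 (y * b) x0 Hyi Hy'i Hy'0 (le_mul_l _ _ _ Hyi Hbi) Hx1 Hinv2). }
    exists x1. split. split. eapply filt_up; eauto. exact Hx1E. exact Hx1'.
  - intros [x [[Hx HxE] Hr]].
    destruct (filtE_mem _ _ Hfe Hx) as [Hxi Hx0].
    destruct (filtE_mem _ _ Hfe Ha) as [Hai _].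
    assert (Hx' : eta (x * a)) by (eapply filt_meet; eauto).
    destruct (filtE_mem _ _ Hfe Hx') as [Hx'i Hx'0].
    assert (Hx'1 : E (ginv G (s ** t)) (x * a)) by (eapply L_down; eauto; apply le_mul_l; auto).
    assert (Hx'2 : E (ginv G t) (x * a)) by (eapply L_down; eauto; apply le_mul_r; auto).
    destruct (L_exists S G phi Hphi t (x * a) Hx'i Hx'0 Hx'2) as [z0 Hz0].
    assert (Hr2 : Fphi t (rr (ginv G t) eta) z0) by (exists (x * a); split; [split; auto|exact Hz0]).
    rewrite <- H1 in Hr2. destruct Hr2 as [Hz0z Hz0E].
    destruct (filtE_mem _ _ Hfz Hz0z) as [Hz0i Hz00].
    assert (Hz0s : E (ginv G s) z0). { rewrite <- (gid1 s t). exact (L_dom S G phi Hphi t (ginv G (s ** t)) (x*a) z0 Hx'i Hz0 Hx'1). }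
    destruct (L_exists S G phi Hphi s z0 Hz0i Hz00 Hz0s) as [w Hw].
    assert (Hr3 : Fphi s (rr (ginv G s) zeta) w) by (exists z0; split; [split; auto|exact Hw]).
    rewrite <- H2 in Hr3. destruct Hr3 as [Hwx _].
    assert (Hc := L_comp S G phi Hphi s t (x * a) z0 w Hx'i Hx'0 Hz0 Hw).
    destruct (L_img S G phi _ _ _ Hxi Hr) as [Hyi HyE].
    assert (Hle : le w y).
    { exact (L_mono S G phi Hphi _ x y (x * a) w Hxi Hx'i Hx'0 (le_mul_l _ _ _ Hxi Hai) Hr Hc). }
    split. eapply filt_up; eauto. exact HyE.
Qed.


Local Notation TcE := (TcE S).
Local Notation TcEg := (TcEg S G phi).

Lemma Tc_tightE V xi : TcE V -> V xi -> tightE xi.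
Proof. apply Tc_tight. Qed.

Lemma L1a g V : Ig g V -> TcE V /\ supp g V.
Proof.
  intros [U [HU ->]]. split.
  - exact (Tc_pre _ _ _ _ _ _ _ _ U (I1 S G phi g) HU (fun _ _ => I)).
  - intros xi [_ [Hm _]]. exact Hm.
Qed.

Lemma rho_eq g V : rho S G phi g V = fun z => exists x, V x /\ meets g x /\ z = rr g x.
Proof.
  apply pred_ext. intro z. unfold rho. split.
  - intros [xi [HV [Hm Heq]]]. exists xi. split; [exact HV|]. split; [exact Hm|]. apply pred_ext. exact Heq.
  - intros [xi [HV [Hm ->]]]. exists xi. split; [exact HV|]. split; [exact Hm|]. intro x. unfold Inst.rr. tauto.
Qed.

Lemma rho_Tc g V : TcE V -> supp g V -> TcEg g (rho S G phi g V).
Proof. intros HV Hs. rewrite rho_eq. exact (Tc_img _ _ _ _ _ _ _ _ V (I1 S G phi g) HV Hs). Qed.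

Lemma hatphi_eq g U : hatphi S G phi g U = fun z => exists x, U x /\ True /\ z = Fphi g x.
Proof.
  apply pred_ext. intro z. unfold hatphi. split.
  - intros [xi [HU Heq]]. exists xi. split; [exact HU|]. split; [exact I|]. apply pred_ext. exact Heq.
  - intros [xi [HU [_ ->]]]. exists xi. split; [exact HU|]. intro y. unfold Inst.Fphi. tauto.
Qed.

Lemma hatphi_Tc g U : TcEg (ginv G g) U -> TcEg g (hatphi S G phi g U).
Proof. intros HU. rewrite hatphi_eq. exact (Tc_img _ _ _ _ _ _ _ _ U (I2 S G phi Hphi g) HU (fun _ _ => I)). Qed.

Lemma L1b g V : TcE V -> supp g V -> Ig g V.
Proof.
  intros HV Hs. exists (rho S G phi g V). split. apply rho_Tc; auto.
  apply pred_ext. intro xi. split.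
  - intro Hx. split. eapply Tc_tightE; eauto. split. apply Hs; auto.
    rewrite rho_eq. exists xi. split; [exact Hx|]. split. apply Hs; auto. reflexivity.
  - intros [Ht [Hm Hr]]. rewrite rho_eq in Hr. destruct Hr as [x [HVx [Hmx Heq]]].
    assert (Hfx : filtE x) by (apply tight_filter; eapply Tc_tightE; eauto).
    assert (Hfxi : filtE xi) by (apply tight_filter; auto).
    replace xi with x. exact HVx.
    rewrite <- (up_rr g x), <- (up_rr g xi) by auto. f_equal. symmetry. exact Heq.
Qed.

Lemma L1 g V : Ig g V <-> TcE V /\ supp g V.
Proof. split. apply L1a. intros [H1 H2]. apply L1b; auto. Qed.

Lemma psi_maps g V : Ig (ginv G g) V -> Ig g (psi g V).
Proof.
  intro H. destruct (L1a _ _ H) as [HV Hs].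
  exists (hatphi S G phi g (rho S G phi (ginv G g) V)). split.
  apply hatphi_Tc. apply rho_Tc; auto. reflexivity.
Qed.

Lemma PSI_INV g W : TcE W -> supp g W -> psi g (psi (ginv G g) W) = W.
Proof.
  intros HW Hs. apply pred_ext. intro xi. split.
  - intros Hx. apply psi_char in Hx. destruct Hx as [Ht [Hm [eta [Heta [Hme Hrel]]]]].
    apply psi_char in Heta. destruct Heta as [Het [Hem [zeta [Hz [Hzm Hrel2]]]]].
    assert (Hfz : filtE zeta) by (apply tight_filter; eapply Tc_tightE; eauto).
    assert (H3 := R3 _ _ _ Hfz Hzm Hrel2). rewrite ginv_ginv in H3.
    rewrite ginv_ginv in Hzm.
    replace xi with zeta. exact Hz.
    apply (R2 g eta); auto; apply tight_filter; eauto using Tc_tightE.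
  - intro Hx. assert (Ht := Tc_tightE _ _ HW Hx). assert (Hm := Hs _ Hx).
    assert (Hm' : meets (ginv G (ginv G g)) xi) by (rewrite ginv_ginv; exact Hm).
    destruct (R1 (ginv G g) xi Ht Hm') as [eta [Het [Hem Hrel]]].
    apply psi_char. split; [exact Ht|]. split; [exact Hm|]. exists eta. split.
    + apply psi_char. split; [exact Het|]. split; [exact Hem|]. exists xi. auto.
    + split; [exact Hem|]. assert (H3 := R3 _ _ _ (tight_filter _ _ _ _ Ht) Hm' Hrel).
      rewrite ginv_ginv in H3. exact H3.
Qed.

Lemma PSI_INV' g V : Ig (ginv G g) V -> psi (ginv G g) (psi g V) = V.
Proof.
  intro H. destruct (L1a _ _ H) as [HV Hs].
  assert (E1 := PSI_INV (ginv G g) V HV Hs). rewrite ginv_ginv in E1. exact E1.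
Qed.

Lemma supp_one V : TcE V -> supp (gone G) V.
Proof.
  intros HV xi Hx. assert (Hf := tight_filter _ _ _ _ (Tc_tightE _ _ HV Hx)).
  destruct (filt_ne _ _ _ Hf) as [a Ha]. exists a. split. exact Ha.
  rewrite (Eg_one S G phi Hphi). eapply filt_sub; eauto.
Qed.

Lemma rr_one xi : filtE xi -> rr (gone G) xi = xi.
Proof.
  intro Hf. apply pred_ext. intro x. unfold Inst.rr. rewrite (Eg_one S G phi Hphi). split.
  tauto. intro H. split. exact H. eapply filt_sub; eauto.
Qed.
Lemma Fphi_one xi : filtE xi -> Fphi (gone G) xi = xi.
Proof.
  intro Hf. apply pred_ext. intro y. unfold Inst.Fphi. split.
  - intros [x [Hx Hr]]. destruct (filtE_mem _ _ Hf Hx) as [Hxi Hx0].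
    apply (rel_one S G phi Hphi x y Hxi Hx0) in Hr. subst. exact Hx.
  - intro Hy. destruct (filtE_mem _ _ Hf Hy) as [Hyi Hy0]. exists y. split. exact Hy.
    apply (rel_one S G phi Hphi y y Hyi Hy0). reflexivity.
Qed.

Theorem main_pa : is_partial_action G TcE Ig psi.
Proof.
  split; [|split; [|split; [|split; [|split]]]].
  -
    intro g. split; [|split; [|split]].
    + intros V H. apply L1a in H. tauto.
    + apply L1b. apply Tc_empty. intros xi [].
    + intros V W HV HW. apply L1a in HV. apply L1a in HW. apply L1b.
      apply Tc_union; tauto. intros xi [Hx|Hx]. apply (proj2 HV); auto. apply (proj2 HW); auto.
    + intros V W HV HW. apply L1a in HV. apply L1b.
      apply Tc_inter; tauto. intros xi [Hx _]. apply (proj2 HV); auto.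
  -
    intro g. split; [|split; [|split; [|split; [|split; [|split]]]]].
    + apply psi_maps.
    + intros W HW. exists (psi (ginv G g) W). split.
      * apply psi_maps. rewrite ginv_ginv. exact HW.
      * destruct (L1a _ _ HW). apply PSI_INV; auto.
    + intros V V' HV HV' Heq. rewrite <- (PSI_INV' g V HV), <- (PSI_INV' g V' HV'). congruence.
    + apply pred_ext. intro xi. split. intro H. apply psi_char in H. destruct H as [_ [_ [eta [[] _]]]].
      intros [].
    + intros V W HV HW. apply pred_ext. intro xi. unfold sunion. rewrite !psi_char. split.
      * intros [Ht [Hm [eta [[H|H] [Hme Hr]]]]]; [left|right]; split; auto; split; auto; exists eta; auto.
      * intros [[Ht [Hm [eta [H [Hme Hr]]]]]|[Ht [Hm [eta [H [Hme Hr]]]]]]; split; auto; split; auto;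
        exists eta; unfold sunion; auto.
    + intros V W HV HW. destruct (L1a _ _ HV) as [HVt _]. destruct (L1a _ _ HW) as [HWt _].
      apply pred_ext. intro xi. unfold sinter. rewrite !psi_char. split.
      * intros [Ht [Hm [eta [[H1 H2] [Hme Hr]]]]]. split; (split; auto; split; auto; exists eta; auto).
      * intros [[Ht [Hm [eta [H [Hme Hr]]]]] [_ [_ [eta' [H' [Hme' Hr']]]]]].
        split; auto; split; auto. exists eta. split; [split; [exact H|] | split; [exact Hme|exact Hr]].
        replace eta with eta'. exact H'. apply (INJ g eta' eta xi); auto; apply tight_filter;
        [exact (Tc_tightE _ _ HWt H') | exact (Tc_tightE _ _ HVt H)].
    + intros V W HV HW. destruct (L1a _ _ HV) as [HVt _]. destruct (L1a _ _ HW) as [HWt _].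
      apply pred_ext. intro xi. unfold sdiff. rewrite !psi_char. split.
      * intros [Ht [Hm [eta [[H1 H2] [Hme Hr]]]]]. split. split; auto; split; auto; exists eta; auto.
        intros [_ [_ [eta' [H' [Hme' Hr']]]]]. apply H2.
        replace eta with eta'. exact H'. apply (INJ g eta' eta xi); auto; apply tight_filter;
        [exact (Tc_tightE _ _ HWt H') | exact (Tc_tightE _ _ HVt H1)].
      * intros [[Ht [Hm [eta [H [Hme Hr]]]]] Hn]. split; auto; split; auto. exists eta. split; auto.
        split; auto. intro HW'. apply Hn. split; auto; split; auto. exists eta. auto.
  -
    intro V. rewrite L1. split. tauto. intro H. split; auto. apply supp_one; auto.
  -
    intros V HV. apply pred_ext. intro xi. rewrite psi_char. rewrite ginv_one. split.
    + intros [Ht [Hm [eta [Heta [Hme Hr]]]]]. unfold RelE in Hr. rewrite ginv_one in Hr.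
      assert (Hfe : filtE eta) by (apply tight_filter; eapply Tc_tightE; eauto).
      rewrite rr_one, rr_one, Fphi_one in Hr by (auto; apply tight_filter; auto). subst. exact Heta.
    + intro Hx. assert (Ht := Tc_tightE _ _ HV Hx). assert (Hm := supp_one V HV xi Hx).
      split; auto. split; auto. exists xi. split; auto. split; auto.
      unfold RelE. rewrite ginv_one. assert (Hf := tight_filter _ _ _ _ Ht).
      rewrite rr_one, Fphi_one by auto. reflexivity.
  -
    intros s t W. split.
    + intros [V [HV1 [HV2 <-]]]. split. apply psi_maps; auto.
      destruct (L1a _ _ (psi_maps s V HV1)) as [HT _].
      apply L1b. exact HT. intros xi Hx. apply psi_char in Hx.
      destruct Hx as [Ht [Hm [eta [Heta [Hme Hr]]]]].
      destruct (L1a _ _ HV2) as [HVt HVs].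
      apply (R5 s t eta xi); auto. apply tight_filter. exact (Tc_tightE _ _ HVt Heta).
    + intros [HW1 HW2]. destruct (L1a _ _ HW1) as [HWt HWs]. destruct (L1a _ _ HW2) as [_ HWs2].
      exists (psi (ginv G s) W).
      assert (HV : Ig (ginv G s) (psi (ginv G s) W)) by (apply psi_maps; rewrite ginv_ginv; exact HW1).
      split; [exact HV|]. split.
      * destruct (L1a _ _ HV) as [HVt _]. apply L1b. exact HVt.
        intros eta Heta. apply psi_char in Heta. destruct Heta as [Het [Hem [zeta [Hz [Hzm Hr]]]]].
        rewrite <- (gid2 s t). apply (R5 (ginv G s) (s ** t) zeta eta); auto.
        apply tight_filter. exact (Tc_tightE _ _ HWt Hz).
      * apply PSI_INV; auto.
  -
    intros s t V HV1 HV2. destruct (L1a _ _ HV1) as [HVt HVs1]. destruct (L1a _ _ HV2) as [_ HVs2].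
    apply pred_ext. intro xi. rewrite !psi_char. split.
    + intros [Ht [Hm [zeta [Hz [Hzm Hr]]]]]. apply psi_char in Hz.
      destruct Hz as [Hzt [Hzm' [eta [Heta [Hem Hr2]]]]].
      assert (Hfe : filtE eta) by (apply tight_filter; eapply Tc_tightE; eauto).
      split; auto. split.
      * apply (R5 s t zeta xi); auto. apply tight_filter; auto.
      * exists eta. split; auto. split. apply HVs2; auto.
        apply (R4 s t eta zeta xi); auto; apply tight_filter; auto.
    + intros [Ht [Hm [eta [Heta [Hem Hr]]]]].
      assert (Hfe : filtE eta) by (apply tight_filter; eapply Tc_tightE; eauto).
      assert (Het := Tc_tightE _ _ HVt Heta).
      assert (Hmt := HVs1 _ Heta).
      destruct (R1 t eta Het Hmt) as [zeta [Hzt [Hzm Hrz]]].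
      assert (Hzs : meets (ginv G s) zeta).
      { rewrite <- (gid1 s t). apply (R5 t (ginv G (s ** t)) eta zeta); auto. }
      destruct (R1 s zeta Hzt Hzs) as [xi' [Hxt [Hxm Hrx]]].
      assert (Hxm2 : meets (s ** t) xi') by (apply (R5 s t zeta xi'); auto; apply tight_filter; auto).
      assert (H4 := R4 s t eta zeta xi' Hfe (tight_filter _ _ _ _ Hzt) (tight_filter _ _ _ _ Hxt) Hmt Hxm Hrz Hrx).
      assert (Heq : xi = xi') by (apply (R2 (s ** t) eta); auto; apply tight_filter; auto).
      subst xi'. split; auto. split; auto. exists zeta. split.
      * apply psi_char. split; auto. split; auto. exists eta. auto.
      * auto.
Qed.

End Main.


End Main.
Import Main.

Theorem mainTheorem13 (S : InvSemigroup) (G : Grp) (phi : S -> G)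
  (Hphi : @pure_grading S G phi) :
  is_partial_action G (TcE S) (@Ig S G phi) (@psi S G phi).
Proof. apply main_pa. exact Hphi. Qed.
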